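(* Let $f_0,f_1$ be finitely supported probability distributions on a connected, locally finite graph $G$, and endow $G$ with the $W_1$-orientation with respect to $(f_0,f_1)$. Then every oriented path on $(G,\to)$ is a geodesic of $G$.
   Context: $d$ is the graph distance. A path of length $n$ is a sequence $\gamma(0),\dots,\gamma(n)$ of vertices with consecutive ones adjacent; $L(\gamma)=n$, $e_0(\gamma)=\gamma(0)$, $e_1(\gamma)=\gamma(n)$; it is a geodesic if $n=d(\gamma(0),\gamma(n))$. A probability distribution is $f:G\to[0,\infty)$ with $\sum_xf(x)=1$. $\Pi_1(f_0,f_1)$ is the set of couplings $\pi$ of $f_0,f_1$ (nonnegative functions on $G\times G$ with marginals $f_0,f_1$) minimizing $\sum d(x,y)\pi(x,y)$; $\mathcal{C}(f_0,f_1)=\{(x,y):\pi(x,y)>0\text{ for some }\pi\in\Pi_1(f_0,f_1)\}$. The $W_1$-orientation with respect to $(f_0,f_1)$: for adjacent $x,y$, $x\to y$ iff there exist a geodesic $\gamma$ with $(e_0(\gamma),e_1(\gamma))\in\mathcal{C}(f_0,f_1)$ and $k\in\{0,\dots,L(\gamma)-1\}$ with $\gamma(k)=x,\gamma(k+1)=y$. An oriented path is a path with $\gamma(i)\to\gamma(i+1)$ for each $i$. *)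

(* Defs.v *)
From HB Require Import structures.
From mathcomp Require Import all_boot all_order all_algebra.
From mathcomp Require Import boolp classical_sets functions cardinality reals ereal esum.
Set Implicit Arguments. Unset Strict Implicit. Unset Printing Implicit Defensive.
Import Order.TTheory GRing.Theory Num.Theory.
Local Open Scope classical_set_scope.
Local Open Scope ring_scope.

Section W1.
Variables (V : choiceType) (adj : V -> V -> Prop).

Definition is_path (g : nat -> V) (n : nat) : Prop :=
  forall i, (i < n)%N -> adj (g i) (g i.+1).

Definition simple_graph : Prop :=
  (forall x y, adj x y -> adj y x) /\ (forall x, ~ adj x x).
Definition connected_graph : Prop :=
  forall x y, exists g n, is_path g n /\ g 0%N = x /\ g n = y.
Definition locally_finite : Prop := forall x, finite_set [set y | adj x y].

Definition path_len_between (x y : V) : pred nat :=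
  fun n => `[< exists g, is_path g n /\ g 0%N = x /\ g n = y >].

(* graph distance: least length of a path from x to y (0 if none exists) *)
Definition gdist (x y : V) : nat :=
  match pselect (exists n, path_len_between x y n) with
  | left h => ex_minn h
  | right _ => 0%N
  end.

Definition geodesic (g : nat -> V) (n : nat) : Prop :=
  is_path g n /\ n = gdist (g 0%N) (g n).

Variable R : realType.

Definition prob_distr (f : V -> R) : Prop :=
  (forall x, 0 <= f x) /\ (\esum_(x in [set: V]) (f x)%:E = 1%E).
Definition fin_supp (f : V -> R) : Prop := finite_set [set x | f x != 0].

Definition coupling (f0 f1 : V -> R) (pi : V -> V -> R) : Prop :=
  [/\ forall x y, 0 <= pi x y,
      forall x, \esum_(y in [set: V]) (pi x y)%:E = (f0 x)%:E &
      forall y, \esum_(x in [set: V]) (pi x y)%:E = (f1 y)%:E].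

Definition transport_cost (pi : V -> V -> R) : \bar R :=
  \esum_(p in [set: V * V]) ((gdist p.1 p.2)%:R * pi p.1 p.2)%:E.

Definition optimal_coupling (f0 f1 : V -> R) (pi : V -> V -> R) : Prop :=
  coupling f0 f1 pi /\
  forall pi', coupling f0 f1 pi' -> (transport_cost pi <= transport_cost pi')%E.

Definition W1_support (f0 f1 : V -> R) (x y : V) : Prop :=
  exists pi, optimal_coupling f0 f1 pi /\ 0 < pi x y.

Definition W1_arrow (f0 f1 : V -> R) (x y : V) : Prop :=
  adj x y /\
  exists g n, geodesic g n /\ W1_support f0 f1 (g 0%N) (g n) /\
    exists k, (k < n)%N /\ g k = x /\ g k.+1 = y.

Definition oriented_path (f0 f1 : V -> R) (g : nat -> V) (n : nat) : Prop :=
  is_path g n /\ forall i, (i < n)%N -> W1_arrow f0 f1 (g i) (g i.+1).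

End W1.

(* Main.v *)
Require Import Defs.
From mathcomp Require Import all_boot all_algebra.
From mathcomp Require Import reals.
From HB Require Import structures.
From mathcomp Require Import all_order.
From mathcomp Require Import boolp classical_sets functions cardinality ereal esum fsbigop.
Set Implicit Arguments. Unset Strict Implicit. Unset Printing Implicit Defensive.
Import Order.TTheory GRing.Theory Num.Theory.
Local Open Scope classical_set_scope.
Local Open Scope ring_scope.
From mathcomp Require Import lra.
From Stdlib Require Import Lia.
From mathcomp Require Import zify.
Section Graph.
Variables (V : choiceType) (adj : V -> V -> Prop).

Lemma gdist_le x y m g : is_path adj g m -> g 0%N = x -> g m = y ->
  (gdist adj x y <= m)%N.
Proof.
move=> pg g0 gm; rewrite /gdist; case: pselect => [h|//].
case: ex_minnP => k _ H; apply: H; apply/asboolP; by exists g.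
Qed.

Lemma gdist_path x y : connected_graph adj ->
  exists g, is_path adj g (gdist adj x y) /\ g 0%N = x /\ g (gdist adj x y) = y.
Proof.
move=> conn; rewrite /gdist; case: pselect => [h|nh].
  by case: ex_minnP => k /asboolP.
exfalso; apply: nh; have [g [n [pg [g0 gn]]]] := conn x y.
by exists n; apply/asboolP; exists g.
Qed.

Lemma gdist_tri x y z : connected_graph adj ->
  (gdist adj x z <= gdist adj x y + gdist adj y z)%N.
Proof.
move=> conn.
have [g1 [p1 [g10 g1a]]] := gdist_path x y conn.
have [g2 [p2 [g20 g2b]]] := gdist_path y z conn.
set a := gdist adj x y in p1 g1a *; set b := gdist adj y z in p2 g2b *.
pose g i := if (i <= a)%N then g1 i else g2 (i - a)%N.
have gE i : (a <= i)%N -> g i = g2 (i - a)%N.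
  move=> ai; rewrite /g; case: ifP => // ia.
  have -> : i = a by apply/eqP; rewrite eqn_leq ia ai.
  by rewrite subnn g1a g20.
apply: (@gdist_le _ _ _ g).
- move=> i iab; case: (ltnP i a) => ia.
    by rewrite /g ia (ltnW ia); apply: p1.
  rewrite !gE ?(leq_trans ia) // subSn //; apply: p2.
  by rewrite ltn_subLR // addnC.
- by rewrite /g leq0n.
- by rewrite gE ?leq_addr // addKn.
Qed.

Lemma gdist_prefix h m k : is_path adj h m -> (k <= m)%N ->
  (gdist adj (h 0%N) (h k) <= k)%N.
Proof.
move=> ph km; apply: (gdist_le (g := h)) => // i ik; apply: ph.
exact: leq_trans ik km.
Qed.

Lemma gdist_suffix h m k : is_path adj h m -> (k <= m)%N ->
  (gdist adj (h k) (h m) <= m - k)%N.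
Proof.
move=> ph km; apply: (gdist_le (g := fun i => h (k + i)%N)).
- move=> i ik; rewrite addnS; apply: ph; by rewrite -ltn_subRL.
- by rewrite addn0.
- by rewrite subnKC.
Qed.

Lemma gdist_refl x : gdist adj x x = 0%N.
Proof.
by apply/eqP; rewrite -leqn0; apply: (gdist_le (g := fun _ => x)).
Qed.

End Graph.
Definition nxt (n i : nat) : nat := if (i.+1 < n)%N then i.+1 else 0%N.

Lemma nxt_lt n i : (i < n)%N -> (nxt n i < n)%N.
Proof. by rewrite /nxt; case: ifP => // _; case: n. Qed.

Lemma big_rot (T : Type) (idx : T) (op : Monoid.com_law idx) n (F : nat -> T) :
  \big[op/idx]_(i < n) F (nxt n i) = \big[op/idx]_(i < n) F i.
Proof.
rewrite -(big_mkord xpredT (fun i => F (nxt n i))) -(big_mkord xpredT F).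
case: n => [|n]; first by rewrite !big_geq.
rewrite big_nat_recr //= [RHS]big_nat_recl // /nxt ltnn Monoid.mulmC.
congr (op _ _); apply: eq_big_nat => i /andP[_ ilt].
by rewrite ltnS ilt.
Qed.

Section Reals.
Variable R : realType.

Lemma esum_seq (T : choiceType) (h : T -> R) (s : seq T) : uniq s ->
  (forall t, 0 <= h t) -> (forall t, h t != 0 -> t \in s) ->
  \esum_(t in [set: T]) (h t)%:E = (\sum_(t <- s) h t)%:E.
Proof.
move=> us h0 hs; rewrite -sumEFin (fsbig_seq _ _ us) -esum_fset //; last first.
  by move=> i _; rewrite lee_fin.
rewrite [RHS]esum_mkcond; apply: eq_esum => t _; case: ifPn => // ts.
have : h t == 0.
  apply: contraNT ts => /hs ts; by rewrite inE.
by move/eqP->.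
Qed.

Lemma sum_ind (T : eqType) (s : seq T) (a : T) (F : T -> R) :
  uniq s -> a \in s -> \sum_(x <- s) (x == a)%:R * F x = F a.
Proof.
move=> us sa; rewrite (bigD1_seq a) //= eqxx mul1r big1 ?addr0 //.
by move=> i /negbTE ->; rewrite mul0r.
Qed.

Lemma eps_exists n (a : nat -> R) : (forall i, (i < n)%N -> 0 < a i) ->
  exists2 e, 0 < e & forall i, (i < n)%N -> e <= a i.
Proof.
elim: n => [|n IH] H; first by exists 1.
have [e e0 He] := IH (fun i lt => H i (ltnW lt)).
exists (Num.min e (a n)).
  by rewrite lt_min e0 H.
move=> i; rewrite ltnS leq_eqVlt => /orP[/eqP ->|lt].
  by rewrite ge_min lexx orbT.
by rewrite ge_min He.
Qed.

Lemma coupling_supp (V : choiceType) (f0 f1 : V -> R) pi :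
  coupling f0 f1 pi -> forall x y, pi x y != 0 -> f0 x != 0 /\ f1 y != 0.
Proof.
move=> [p0 m0 m1] x y pxy.
have le1 : ((pi x y)%:E <= (f0 x)%:E)%E.
  rewrite -m0; apply: esum_ge; exists [set y].
    by split => //; exact: finite_set1.
  by rewrite fsbig_set1.
have le2 : ((pi x y)%:E <= (f1 y)%:E)%E.
  rewrite -m1; apply: esum_ge; exists [set x].
    by split => //; exact: finite_set1.
  by rewrite fsbig_set1.
rewrite !lee_fin in le1 le2.
have pos : 0 < pi x y by rewrite lt_def pxy p0.
split; rewrite gt_eqF //; exact: lt_le_trans pos _.
Qed.

End Reals.
Section Fin.
Variables (V : choiceType) (adj : V -> V -> Prop) (R : realType).
Variables (f0 f1 : V -> R) (s : seq V).
Hypothesis us : uniq s.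

Lemma coupling_fin (pi : V -> V -> R) : (forall x y, 0 <= pi x y) ->
  (forall x y, pi x y != 0 -> x \in s /\ y \in s) ->
  coupling f0 f1 pi <->
  ((forall x, \sum_(y <- s) pi x y = f0 x) /\ (forall y, \sum_(x <- s) pi x y = f1 y)).
Proof.
move=> p0 ps.
have E0 x : \esum_(y in [set: V]) (pi x y)%:E = (\sum_(y <- s) pi x y)%:E.
  by apply: esum_seq => // y /(ps x y) [].
have E1 y : \esum_(x in [set: V]) (pi x y)%:E = (\sum_(x <- s) pi x y)%:E.
  by apply: (esum_seq (h := fun x => pi x y)) => // x /(ps x y) [].
rewrite /coupling; split => [[_ m0 m1]|[m0 m1]].
  split => x; [have := m0 x; rewrite E0|have := m1 x; rewrite E1]; by case.
by split => // x; rewrite ?E0 ?E1 ?m0 ?m1.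
Qed.

Lemma cost_fin (pi : V -> V -> R) : (forall x y, 0 <= pi x y) ->
  (forall x y, pi x y != 0 -> x \in s /\ y \in s) ->
  transport_cost adj pi =
  (\sum_(x <- s) \sum_(y <- s) (gdist adj x y)%:R * pi x y)%:E.
Proof.
move=> p0 ps; rewrite /transport_cost.
rewrite (esum_seq (s := [seq (x, y) | x <- s, y <- s])).
- by rewrite big_allpairs.
- by apply: allpairs_uniq => // [[a b] [c d]] _ _.
- by move=> [x y]; apply: mulr_ge0 => //; rewrite ler0n.
- move=> [x y] /=; rewrite mulf_eq0 negb_or => /andP[_ /ps [xs ys]].
  by apply/allpairsP; exists (x, y).
Qed.

End Fin.
Lemma sum_ind1 (R : realType) (T : eqType) (s : seq T) (a : T) :
  uniq s -> a \in s -> \sum_(x <- s) (x == a)%:R = 1 :> R.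
Proof.
move=> us sa; rewrite -[RHS](@sum_ind R T s a (fun _ => 1) us sa).
by apply: eq_bigr => x _; rewrite mulr1.
Qed.

Lemma cyc (V : choiceType) (adj : V -> V -> Prop) (R : realType) (f0 f1 : V -> R)
  (F0 : fin_supp f0) (F1 : fin_supp f1) n (X Y : nat -> V) (P : nat -> V -> V -> R) :
  (forall i, (i < n)%N -> optimal_coupling adj f0 f1 (P i)) ->
  (forall i, (i < n)%N -> 0 < P i (X i) (Y i)) ->
  \sum_(i < n) (gdist adj (X i) (Y i))%:R <=
  \sum_(i < n) (gdist adj (X (nxt n i)) (Y i))%:R :> R.
Proof.
move=> Popt Ppos.
have [->|n0] := posnP n; first by rewrite !big_ord0.
move: F0 F1 => /finite_seqP [s0 E0] /finite_seqP [s1 E1].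
set s := undup (s0 ++ s1).
have us : uniq s := undup_uniq _.
have ins0 x : f0 x != 0 -> x \in s.
  move=> h; have : ([set x | f0 x != 0] : set V) x := h.
  by rewrite E0 /= => xs0; rewrite mem_undup mem_cat xs0.
have ins1 x : f1 x != 0 -> x \in s.
  move=> h; have : ([set x | f1 x != 0] : set V) x := h.
  by rewrite E1 /= => xs1; rewrite mem_undup mem_cat xs1 orbT.
have Pn i : (i < n)%N -> forall x y, 0 <= P i x y.
  by move=> lt; have [[]] := Popt i lt.
have Ps i : (i < n)%N -> forall x y, P i x y != 0 -> x \in s /\ y \in s.
  move=> lt x y h; have [cP _] := Popt i lt.
  by have [/ins0 ? /ins1 ?] := coupling_supp cP h.
have Pm i : (i < n)%N -> (forall x, \sum_(y <- s) P i x y = f0 x) /\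
     (forall y, \sum_(x <- s) P i x y = f1 y).
  by move=> lt; apply/(coupling_fin f0 f1 us (Pn i lt) (Ps i lt)); have [] := Popt i lt.
have P0 j x y : (j < n)%N -> (x \notin s) || (y \notin s) -> P j x y = 0.
  move=> jn H; apply/eqP; apply: contraTT H => /(Ps j jn x y) [-> ->] //.
have XYs i : (i < n)%N -> X i \in s /\ Y i \in s.
  by move=> lt; apply: (Ps i lt); rewrite lt0r_neq0 // Ppos.
have nn : n%:R != 0 :> R by rewrite pnatr_eq0 -lt0n.
have npos : 0 < n%:R :> R by rewrite ltr0n.
have ninv : 0 < n%:R^-1 :> R by rewrite invr_gt0 ltr0n.
pose pibar x y := \sum_(j < n) n%:R^-1 * P j x y.
have pbn x y : 0 <= pibar x y.
  by apply: sumr_ge0 => j _; apply: mulr_ge0; [exact: ltW|exact: Pn].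
have pbpos i : (i < n)%N -> 0 < pibar (X i) (Y i).
  move=> lt; rewrite /pibar (bigD1 (Ordinal lt)) //=.
  apply: (lt_le_trans (y := n%:R^-1 * P i (X i) (Y i))).
    by rewrite mulr_gt0 // Ppos.
  rewrite lerDl; apply: sumr_ge0 => j _; apply: mulr_ge0; [exact: ltW|exact: Pn].
have [e e0 He] := @eps_exists R n (fun i => pibar (X i) (Y i) / n%:R)
   (fun i lt => divr_gt0 (pbpos i lt) npos).

pose Xn i := X (nxt n i).
have XYn i : (i < n)%N -> Xn i \in s by move=> lt; have [] := XYs _ (nxt_lt lt).
pose delta x y := \sum_(i < n) (y == Y i)%:R * ((x == Xn i)%:R - (x == X i)%:R) : R.
pose pi' x y := pibar x y + e * delta x y.
have pi'n x y : 0 <= pi' x y.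
  have h1 : e * delta x y = \sum_(i < n) e * ((y == Y i)%:R * (x == Xn i)%:R)
       - \sum_(i < n) e * ((y == Y i)%:R * (x == X i)%:R).
    rewrite /delta mulr_sumr -sumrB; apply: eq_bigr => i _.
    by rewrite mulrBr mulrBr.
  have h2 : 0 <= \sum_(i < n) e * ((y == Y i)%:R * (x == Xn i)%:R).
    by apply: sumr_ge0 => i _; apply: mulr_ge0; [exact: ltW|apply: mulr_ge0].
  have h3 : \sum_(i < n) e * ((y == Y i)%:R * (x == X i)%:R) <= pibar x y.
    apply: (le_trans (y := \sum_(i < n) pibar x y / n%:R)).
      apply: ler_sum => i _.
      case: eqP => [->|_]; case: eqP => [->|_]; rewrite ?mulr1 ?mulr0 ?mul0r.
      - exact: He.
      - by apply: divr_ge0 => //; exact: ltW.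
      - by apply: divr_ge0 => //; exact: ltW.
      - by apply: divr_ge0 => //; exact: ltW.
    rewrite sumr_const card_ord; set m := n%:R.
    by rewrite -mulr_natr /m divfK.
  rewrite /pi' h1; lra.
have pi's x y : pi' x y != 0 -> x \in s /\ y \in s.
  move=> h; split; apply: contraNT h => ns; apply/eqP.
  - rewrite /pi' /pibar /delta big1 ?add0r; last first.
      by move=> j _; rewrite P0 ?ns ?mulr0.
    rewrite big1 ?mulr0 // => i _.
    have [xs _] := XYs i (ltn_ord i).
    have xn := XYn i (ltn_ord i).
    rewrite (_ : (x == X i) = false); last by apply: contraNF ns => /eqP ->.
    rewrite (_ : (x == Xn i) = false); last by apply: contraNF ns => /eqP ->.
    by rewrite subrr mulr0.
  - rewrite /pi' /pibar /delta big1 ?add0r; last first.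
      by move=> j _; rewrite P0 ?ns ?orbT ?mulr0.
    rewrite big1 ?mulr0 // => i _.
    have [_ ys] := XYs i (ltn_ord i).
    rewrite (_ : (y == Y i) = false); last by apply: contraNF ns => /eqP ->.
    by rewrite mul0r.
have pbrow x : \sum_(y <- s) pibar x y = f0 x.
  rewrite /pibar exchange_big /=.
  under eq_bigr => j _ do rewrite -mulr_sumr (proj1 (Pm j (ltn_ord j))).
  by rewrite sumr_const card_ord; set m := n%:R; rewrite -mulr_natl /m mulrA mulfV // mul1r.
have pbcol y : \sum_(x <- s) pibar x y = f1 y.
  rewrite /pibar exchange_big /=.
  under eq_bigr => j _ do rewrite -mulr_sumr (proj2 (Pm j (ltn_ord j))).
  by rewrite sumr_const card_ord; set m := n%:R; rewrite -mulr_natl /m mulrA mulfV // mul1r.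
have cpi' : coupling f0 f1 pi'.
  apply/(coupling_fin f0 f1 us pi'n pi's); split => [x|y].
  - rewrite /pi' big_split /= pbrow -mulr_sumr /delta exchange_big /=.
    under eq_bigr => i _ do rewrite -mulr_suml
        (@sum_ind1 R V s (Y i) us (proj2 (XYs i (ltn_ord i)))) mul1r.
    rewrite sumrB (big_rot _ _ (fun i => (x == X i)%:R)) subrr mulr0 addr0 //.
  - rewrite /pi' big_split /= pbcol -mulr_sumr /delta exchange_big /=.
    rewrite big1 ?mulr0 ?addr0 // => i _.
    rewrite -mulr_sumr sumrB !sum_ind1 ?subrr ?mulr0 //.
    + exact: (proj1 (XYs i (ltn_ord i))).
    + exact: XYn.

pose c x y := (gdist adj x y)%:R : R.
pose C (pi : V -> V -> R) := \sum_(x <- s) \sum_(y <- s) c x y * pi x y.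
have CP j : (j < n)%N -> C (P j) <= C pi'.
  move=> lt; have [_ opt] := Popt j lt; have := opt _ cpi'.
  by rewrite (cost_fin adj us (Pn j lt) (Ps j lt)) (cost_fin adj us pi'n pi's) lee_fin.
have Cpb : C pibar = \sum_(j < n) n%:R^-1 * C (P j).
  rewrite /C; under [RHS]eq_bigr => j _ do rewrite mulr_sumr.
  rewrite [RHS]exchange_big /=; apply: eq_bigr => x _.
  under [RHS]eq_bigr => j _ do rewrite mulr_sumr.
  rewrite [RHS]exchange_big /=; apply: eq_bigr => y _.
  rewrite /pibar mulr_sumr; apply: eq_bigr => j _; by rewrite mulrCA.
have Cle : C pibar <= C pi'.
  rewrite Cpb; apply: (le_trans (y := \sum_(j < n) n%:R^-1 * C pi')).
    by apply: ler_sum => j _; apply: ler_wpM2l; [exact: ltW|exact: CP].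
  rewrite sumr_const card_ord; set m := n%:R.
  by rewrite -mulr_natr /m mulrAC mulVf // mul1r.
have Cpi' : C pi' = C pibar + e * \sum_(i < n) (c (Xn i) (Y i) - c (X i) (Y i)).
  rewrite /C /pi'.
  under eq_bigr => x _ do under eq_bigr => y _ do rewrite mulrDr.
  under eq_bigr => x _ do rewrite big_split /=.
  rewrite big_split /=; congr (_ + _).
  transitivity (e * \sum_(x <- s) \sum_(y <- s) c x y * delta x y).
    rewrite mulr_sumr; apply: eq_bigr => x _; rewrite mulr_sumr.
    by apply: eq_bigr => y _; rewrite mulrCA.
  congr (e * _).
  transitivity (\sum_(x <- s) \sum_(i < n) c x (Y i) * ((x == Xn i)%:R - (x == X i)%:R)).
    apply: eq_bigr => x _.
    under eq_bigr => y _ do rewrite /delta mulr_sumr.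
    rewrite exchange_big /=; apply: eq_bigr => i _.
    under eq_bigr => y _ do rewrite mulrCA.
    by rewrite (@sum_ind R V s (Y i) (fun y => c x y * ((x == Xn i)%:R - (x == X i)%:R)) us (proj2 (XYs i (ltn_ord i)))).
  rewrite exchange_big /=; apply: eq_bigr => i _.
  under eq_bigr => x _ do rewrite mulrBr.
  rewrite sumrB.
  under eq_bigr => x _ do rewrite mulrC.
  under [X in _ - X]eq_bigr => x _ do rewrite mulrC.
  rewrite (@sum_ind R V s (Xn i) (fun x => c x (Y i)) us (XYn i (ltn_ord i))).
  by rewrite (@sum_ind R V s (X i) (fun x => c x (Y i)) us (proj1 (XYs i (ltn_ord i)))).
have : 0 <= e * \sum_(i < n) (c (Xn i) (Y i) - c (X i) (Y i)).
  move: Cle; rewrite Cpi'; lra.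
rewrite pmulr_rge0 // sumrB subr_ge0 //.
Qed.
Lemma sum_last n (D : nat) : (0 < n)%N ->
  (\sum_(i < n) (if (i.+1 < n)%N then 0 else D) = D)%N.
Proof.
case: n => // n _; rewrite big_ord_recr /= ltnn big1 ?add0n // => i _.
by rewrite ltnS ltn_ord.
Qed.

Theorem theorem2p13 (V : choiceType) (adj : V -> V -> Prop) (R : realType)
    (f0 f1 : V -> R) :
  simple_graph adj -> connected_graph adj -> locally_finite adj ->
  prob_distr f0 -> prob_distr f1 -> fin_supp f0 -> fin_supp f1 ->
  forall (g : nat -> V) (n : nat),
    oriented_path adj f0 f1 g n -> geodesic adj g n.
Proof.
move=> _ conn _ _ _ F0 F1 g n [pg arr]; split => //.
apply/eqP; rewrite eqn_leq (gdist_le pg) // andbT.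
have [->|n0] := posnP n; first done.
set Dg := gdist adj (g 0%N) (g n).
pose T := ((nat -> V) * nat * nat * (V -> V -> R))%type.
have : forall i, exists d : T, (i < n)%N ->
   [/\ geodesic adj d.1.1.1 d.1.1.2, optimal_coupling adj f0 f1 d.2,
       0 < d.2 (d.1.1.1 0%N) (d.1.1.1 d.1.1.2), (d.1.2 < d.1.1.2)%N &
       (d.1.1.1 d.1.2 = g i /\ d.1.1.1 d.1.2.+1 = g i.+1)].
  move=> i; case: (ltnP i n) => lt; last by exists (g, 0%N, 0%N, fun _ _ => 0).
  have [_ [h [m [gh [[pi [opt pos]] [k [km [hk hk1]]]]]]]] := arr i lt.
  by exists (h, m, k, pi).
move=> /choice [D HD].
pose H i := (D i).1.1.1; pose M i := (D i).1.1.2; pose K i := (D i).1.2.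
pose P i := (D i).2; pose X i := H i 0%N; pose Y i := H i (M i).
have := @cyc V adj R f0 f1 F0 F1 n X Y P
   (fun i lt => let: And5 _ o _ _ _ := HD i lt in o)
   (fun i lt => let: And5 _ _ o _ _ := HD i lt in o).
rewrite -!natr_sum ler_nat.
have eqM : (\sum_(i < n) gdist adj (X i) (Y i) = \sum_(i < n) M i)%N.
  apply: eq_bigr => i _; have [[_ e] _ _ _ _] := HD i (ltn_ord i).
  exact: esym e.
rewrite eqM.
have bound i : (i < n)%N -> (gdist adj (X (nxt n i)) (Y i) <=
    K (nxt n i) + (M i - (K i).+1) + (if (i.+1 < n)%N then 0 else Dg))%N.
  move=> lt; have jlt := nxt_lt lt.
  have [[pj _] _ _ kmj [hkj _]] := HD _ jlt.
  have [[pi _] _ _ kmi [_ hki]] := HD i lt.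
  have t1 := gdist_tri (X (nxt n i)) (g (nxt n i)) (Y i) conn.
  have t2 : (gdist adj (X (nxt n i)) (g (nxt n i)) <= K (nxt n i))%N.
    by rewrite -hkj; apply: (gdist_prefix pj); exact: ltnW.
  have t3 : (gdist adj (g i.+1) (Y i) <= M i - (K i).+1)%N.
    by rewrite -hki; apply: (gdist_suffix pi).
  have t4 := gdist_tri (g 0%N) (g n) (Y i) conn.
  rewrite /Dg; move: t1 t2 t4; rewrite /nxt; case: ifP => lti.
    move=> t1 t2 _; lia.
  have ein : i.+1 = n by apply/eqP; rewrite eqn_leq lt leqNgt lti.
  rewrite ein in t3; move=> t1 t2 t4; lia.
move=> hle.
have s1 : (\sum_(i < n) gdist adj (X (nxt n i)) (Y i) <= \sum_(i < n)
   (K (nxt n i) + (M i - (K i).+1) + (if (i.+1 < n)%N then 0 else Dg)))%N.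
  by apply: leq_sum => i _; apply: bound.
have rotK : (\sum_(i < n) K (nxt n i) = \sum_(i < n) K i)%N := big_rot _ _ K.
rewrite !big_split /= rotK sum_last // in s1.
have sM : (\sum_(i < n) M i = \sum_(i < n) ((M i - (K i).+1) + K i + 1))%N.
  by apply: eq_bigr => i _; have [_ _ _ km _] := HD i (ltn_ord i); rewrite /M /K; lia.
rewrite !big_split /= sum1_card card_ord in sM.
have hle' : (\sum_(i < n) M i <= \sum_(i < n) gdist adj (X (nxt n i)) (Y i))%N := hle.
have h2 := leq_trans hle' s1.
move: h2 sM; set A := (\sum_(i < n) K i)%N; set B := (\sum_(i < n) (M i - (K i).+1))%N; set C := (\sum_(i < n) M i)%N.
move=> h2 sM.
lia.
Qed.
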